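(* Let $g',g''\in G$ and let $(\xi''_i,\xi'_i)\in A_{g''}\times A_{g'}$, $i=1,2$, be composable pairs. Then $$\varpi_{g''g'}\big(\xi''_1*\xi'_1,\ \xi''_2*\xi'_2\big)=\varpi_{g''}(\xi''_1,\xi''_2)+\varpi_{g'}(\xi'_1,\xi'_2)-\lambda\big((X''_1,X'_1),(X''_2,X'_2)\big),$$ where $X''_i=\mathsf a(\xi''_i)\in T_{g''}G$, $X'_i=\mathsf a(\xi'_i)\in T_{g'}G$, and $\lambda=\tfrac12\,\mathrm{pr}_1^*\theta^L\cdot\mathrm{pr}_2^*\theta^R\in\Omega^2(G\times G)$ with $\mathrm{pr}_1(g'',g')=g''$, $\mathrm{pr}_2(g'',g')=g'$. That is, on $A^{[2]}$ one has $\mathrm{mult}_A^!\varpi=\mathrm{pr}_1^!\varpi+\mathrm{pr}_2^!\varpi-\lambda$.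
   Context: Let $G$ be a Lie group with Lie algebra $\mathfrak g$ carrying an $\mathrm{Ad}$-invariant symmetric bilinear form $\cdot$, $\theta^L=g^{-1}\mathrm dg$, $\theta^R=\mathrm dg\,g^{-1}$; for 1-forms $\alpha,\beta$ with values in $\mathfrak g$, $(\alpha\cdot\beta)(Y_1,Y_2)=\alpha(Y_1)\cdot\beta(Y_2)-\alpha(Y_2)\cdot\beta(Y_1)$. $A_g$ is the space of $\xi\in C^\infty(\mathbb R,\mathfrak g)$ with $\xi(t+1)=\mathrm{Ad}_g\xi(t)+v_\xi$ for a constant $v_\xi\in\mathfrak g$; the anchor $\mathsf a(\xi)\in T_gG$ is determined by $\theta^R(\mathsf a(\xi))=v_\xi$. The 2-form $\varpi$ on $A$ is $\varpi_g(\xi,\zeta)=\int_0^1\dot\xi\cdot\zeta\,dt-\mathrm{Ad}_g(\xi(0))\cdot v_\zeta-\tfrac12v_\xi\cdot v_\zeta$. A pair $(\xi'',\xi')\in A_{g''}\times A_{g'}$ is composable if $\xi'(1)=\xi''(0)$ and the concatenation $\xi''*\xi'$ is smooth, where $(\xi''*\xi')(t)=\xi'(2t)$ for $0\le t\le\tfrac12$, $=\xi''(2t-1)$ for $\tfrac12\le t\le1$, extended to all $t$ by $(\xi''*\xi')(t+1)=\mathrm{Ad}_{g''g'}(\xi''*\xi')(t)+\mathrm{Ad}_{g''}v_{\xi'}+v_{\xi''}$; then $\xi''*\xi'\in A_{g''g'}$. $A^{[2]}\subset A\times A$ is the bundle of composable pairs and $\mathrm{mult}_A(\xi'',\xi')=\xi''*\xi'$.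 *)

(* Defs.v *)
From Stdlib Require Import Reals Lra ClassicalEpsilon.
Open Scope R_scope.

(** The Lie algebra g is modelled in coordinates: g = R^n, an element being a
    function nat -> R of which only the indices i < n are relevant. *)
Definition vec := nat -> R.

Fixpoint rsum (n : nat) (f : nat -> R) : R :=
  match n with O => 0 | S k => rsum k f + f k end.

Definition matvec (n : nat) (M : nat -> nat -> R) (u : vec) : vec :=
  fun i => rsum n (fun j => M i j * u j).

Definition dot (n : nat) (Bm : nat -> nat -> R) (u w : vec) : R :=
  rsum n (fun i => rsum n (fun j => Bm i j * u i * w j)).

(** Abstract Lie group data: a group, its adjoint representation on g = R^n,
    tangent spaces T_g G and the left/right Maurer-Cartan forms
    theta^L_g, theta^R_g : T_g G -> g, with theta^R_g = Ad_g o theta^L_g and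
    theta^R_g a bijection T_g G -> g. *)
Record LieGroup (n : nat) := {
  carrier :> Type;
  gmul : carrier -> carrier -> carrier;
  gone : carrier;
  ginv : carrier -> carrier;
  gmulA : forall a b c, gmul a (gmul b c) = gmul (gmul a b) c;
  gmul1 : forall a, gmul gone a = a /\ gmul a gone = a;
  gmulV : forall a, gmul (ginv a) a = gone /\ gmul a (ginv a) = gone;
  Ad : carrier -> nat -> nat -> R;
  Ad_one : forall u i, (i < n)%nat -> matvec n (Ad gone) u i = u i;
  Ad_mul : forall a b u i, (i < n)%nat ->
      matvec n (Ad (gmul a b)) u i = matvec n (Ad a) (matvec n (Ad b) u) i;
  Tan : carrier -> Type;
  thetaL : forall g, Tan g -> vec;
  thetaR : forall g, Tan g -> vec;
  thetaR_Ad : forall g (X : Tan g) i, (i < n)%nat ->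
      thetaR g X i = matvec n (Ad g) (thetaL g X) i;
  thetaR_surj : forall g (v : vec), exists X : Tan g,
      forall i, (i < n)%nat -> thetaR g X i = v i;
  thetaR_inj : forall g (X Y : Tan g),
      (forall i, (i < n)%nat -> thetaR g X i = thetaR g Y i) -> X = Y
}.
Arguments gmul {n} _ _ _.
Arguments Ad {n} _ _ _ _.
Arguments Tan {n} _ _.
Arguments thetaL {n} _ _ _ _.
Arguments thetaR {n} _ _ _ _.

Definition invariant_form (n : nat) (G : LieGroup n) (Bm : nat -> nat -> R) : Prop :=
  (forall i j, (i < n)%nat -> (j < n)%nat -> Bm i j = Bm j i) /\
  (forall (g : G) u w,
      dot n Bm (matvec n (Ad G g) u) (matvec n (Ad G g) w) = dot n Bm u w).

Definition smooth (f : R -> R) : Prop :=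
  exists D : nat -> R -> R, (forall t, D O t = f t) /\
    forall k t, derivable_pt_lim (D k) t (D (S k) t).

Definition smooth_curve (n : nat) (xi : R -> vec) : Prop :=
  forall i, (i < n)%nat -> smooth (fun t => xi t i).

Definition deriv (f : R -> R) (t : R) : R :=
  match excluded_middle_informative (exists l, derivable_pt_lim f t l) with
  | left H => proj1_sig (constructive_indefinite_description _ H)
  | right _ => 0
  end.

Definition dcurve (xi : R -> vec) : R -> vec := fun t i => deriv (fun s => xi s i) t.

(** Riemann integral (chosen classically; 0 if not integrable) *)
Definition Rint (f : R -> R) (a b : R) : R :=
  match excluded_middle_informative
          (exists _ : Riemann_integrable f a b, True) with
  | left H => RiemannInt (proj1_sig (constructive_indefinite_description _ H))
  | right _ => 0
  end.

Definition vxi (n : nat) (G : LieGroup n) (g : G) (xi : R -> vec) : vec :=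
  fun i => xi 1 i - matvec n (Ad G g) (xi 0) i.

Definition InA (n : nat) (G : LieGroup n) (g : G) (xi : R -> vec) : Prop :=
  smooth_curve n xi /\
  forall t i, (i < n)%nat -> xi (t + 1) i = matvec n (Ad G g) (xi t) i + vxi n G g xi i.

(** anchor: X = a(xi) in T_g G, i.e. theta^R(X) = v_xi *)
Definition is_anchor (n : nat) (G : LieGroup n) (g : G) (xi : R -> vec) (X : Tan G g) : Prop :=
  forall i, (i < n)%nat -> thetaR G g X i = vxi n G g xi i.

Definition varpi (n : nat) (G : LieGroup n) (Bm : nat -> nat -> R) (g : G)
    (xi zeta : R -> vec) : R :=
  Rint (fun t => dot n Bm (dcurve xi t) (zeta t)) 0 1
  - dot n Bm (matvec n (Ad G g) (xi 0)) (vxi n G g zeta)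
  - / 2 * dot n Bm (vxi n G g xi) (vxi n G g zeta).

Definition is_concat (n : nat) (G : LieGroup n) (g2 g1 : G)
    (xi2 xi1 zeta : R -> vec) : Prop :=
  InA n G g2 xi2 /\ InA n G g1 xi1 /\
  (forall i, (i < n)%nat -> xi1 1 i = xi2 0 i) /\
  smooth_curve n zeta /\
  (forall t i, (i < n)%nat -> 0 <= t <= / 2 -> zeta t i = xi1 (2 * t) i) /\
  (forall t i, (i < n)%nat -> / 2 <= t <= 1 -> zeta t i = xi2 (2 * t - 1) i) /\
  (forall t i, (i < n)%nat ->
     zeta (t + 1) i = matvec n (Ad G (gmul G g2 g1)) (zeta t) i
                      + matvec n (Ad G g2) (vxi n G g1 xi1) i + vxi n G g2 xi2 i).

Definition lam (n : nat) (G : LieGroup n) (Bm : nat -> nat -> R) (g2 g1 : G)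
    (X2a : Tan G g2) (X1a : Tan G g1) (X2b : Tan G g2) (X1b : Tan G g1) : R :=
  / 2 * (dot n Bm (thetaL G g2 X2a) (thetaR G g1 X1b)
         - dot n Bm (thetaL G g2 X2b) (thetaR G g1 X1a)).

(* Main.v *)
Require Import Defs.
From Stdlib Require Import Reals Lra Lia ClassicalEpsilon FunctionalExtensionality.
Open Scope R_scope.

Lemma deriv_unique f t l : derivable_pt_lim f t l -> deriv f t = l.
Proof.
  intro H. unfold deriv.
  destruct (excluded_middle_informative _) as [E|E].
  - destruct (constructive_indefinite_description _ E) as [l' Hl']; simpl.
    eapply uniqueness_limite; eauto.
  - exfalso; apply E; eauto.
Qed.

Lemma smooth_props f : smooth f ->
  (forall t, derivable_pt_lim f t (deriv f t)) /\ continuity (fun t => deriv f t)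
  /\ continuity f.
Proof.
  intros [D [H0 HD]].
  assert (Ef : f = D O) by (apply functional_extensionality; intro; rewrite H0; auto).
  assert (Hd : forall t, deriv f t = D 1%nat t).
  { intro t. apply deriv_unique. rewrite Ef. apply HD. }
  split; [|split].
  - intro t. rewrite Hd, Ef. apply HD.
  - intro t. replace (fun t => deriv f t) with (D 1%nat)
      by (apply functional_extensionality; intro; rewrite Hd; auto).
    apply derivable_continuous_pt. exists (D 2%nat t). apply HD.
  - intro t. rewrite Ef. apply derivable_continuous_pt. exists (D 1%nat t). apply HD.
Qed.

Lemma Rint_eq f a b (pr : Riemann_integrable f a b) : Rint f a b = RiemannInt pr.
Proof.
  unfold Rint. destruct (excluded_middle_informative _) as [E|E].
  - apply RiemannInt_P5.
  - exfalso; apply E; exists pr; auto.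
Qed.

Lemma FTC f F a b (pr : Riemann_integrable f a b) : a <= b ->
  (forall x, a <= x <= b -> continuity_pt f x) ->
  (forall x, a <= x <= b -> derivable_pt_lim F x (f x)) ->
  RiemannInt pr = F b - F a.
Proof.
  intros hab C0 HF.
  rewrite (RiemannInt_P20 hab (FTC_P1 hab C0) pr).
  assert (A1 := RiemannInt_P29 hab C0).
  assert (A2 : antiderivative f F a b).
  { split; auto. intros x Hx. exists (exist _ (f x) (HF x Hx)). reflexivity. }
  destruct (antiderivative_Ucte _ _ _ _ _ A1 A2) as [c Hc].
  rewrite (Hc b), (Hc a) by lra. ring.
Qed.

Lemma cov0 (h : R -> R) c d a b
  (pr1 : Riemann_integrable (fun t => c * h (c * t + d)) a b)
  (pr2 : Riemann_integrable h (c * a + d) (c * b + d)) :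
  continuity h -> a <= b -> 0 < c -> RiemannInt pr1 = RiemannInt pr2.
Proof.
  intros Ch hab hc.
  assert (hAB : c * a + d <= c * b + d) by nra.
  assert (C0 : forall x, c * a + d <= x <= c * b + d -> continuity_pt h x) by auto.
  set (P := primitive hAB (FTC_P1 hAB C0)).
  rewrite (RiemannInt_P20 hAB (FTC_P1 hAB C0) pr2).
  rewrite (FTC _ (fun t => P (c * t + d)) a b pr1 hab).
  - reflexivity.
  - intros x _. apply continuity_pt_mult. apply continuity_pt_const; intros u v; auto.
    apply (continuity_pt_comp (fun t => c * t + d) h).
    + apply derivable_continuous_pt. apply derivable_pt_plus.
      apply derivable_pt_scal. apply derivable_pt_id. apply derivable_pt_const.
    + apply Ch.
  - intros x Hx.
    assert (E : (fun t => P (c * t + d)) = comp P (fun t => c * t + d)) by reflexivity.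
    rewrite E. replace (c * h (c * x + d)) with (h (c * x + d) * c) by ring.
    apply derivable_pt_lim_comp.
    + pose proof (derivable_pt_lim_plus (mult_real_fct c id) (fun _ => d) x (c*1) 0
        (derivable_pt_lim_scal id c x 1 (derivable_pt_lim_id x)) (derivable_pt_lim_const d x)) as Hl.
      rewrite Rmult_1_r, Rplus_0_r in Hl. exact Hl.
    + apply RiemannInt_P28. nra.
Qed.

Lemma cov (h : R -> R) c d a b A B
  (pr1 : Riemann_integrable (fun t => c * h (c * t + d)) a b)
  (pr2 : Riemann_integrable h A B) :
  A = c * a + d -> B = c * b + d ->
  continuity h -> a <= b -> 0 < c -> RiemannInt pr1 = RiemannInt pr2.
Proof. intros -> ->. apply cov0. Qed.

Lemma deriv_local f g a b x l : a < x < b -> (forall y, a < y < b -> f y = g y) ->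
  derivable_pt_lim f x l -> derivable_pt_lim g x l.
Proof.
  intros Hx Hfg H eps Heps. destruct (H eps Heps) as [del Hd].
  assert (P : 0 < Rmin del (Rmin (x - a) (b - x))).
  { apply Rmin_pos. apply cond_pos. apply Rmin_pos; lra. }
  exists (mkposreal _ P). intros h Hh Hlt. simpl in Hlt.
  assert (H1 := Rmin_l del (Rmin (x - a) (b - x))).
  assert (H2 := Rmin_r del (Rmin (x - a) (b - x))).
  assert (H3 := Rmin_l (x - a) (b - x)).
  assert (H4 := Rmin_r (x - a) (b - x)).
  assert (Ha : Rabs h < x - a) by lra. assert (Hb : Rabs h < b - x) by lra.
  apply Rabs_def2 in Ha. apply Rabs_def2 in Hb.
  rewrite <- (Hfg x) by lra. rewrite <- (Hfg (x + h)) by lra.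
  apply Hd; auto. lra.
Qed.

Lemma rsum_ext n f g : (forall k, (k < n)%nat -> f k = g k) -> rsum n f = rsum n g.
Proof.
  induction n; simpl; intros H; auto.
  rewrite IHn by (intros; apply H; lia). rewrite H by lia. auto.
Qed.

Lemma rsum_add n f g : rsum n (fun k => f k + g k) = rsum n f + rsum n g.
Proof. induction n; simpl; [ring| rewrite IHn; ring]. Qed.

Lemma rsum_scal n c f : rsum n (fun k => c * f k) = c * rsum n f.
Proof. induction n; simpl; [ring| rewrite IHn; ring]. Qed.

Lemma rsum_swap n m F : rsum n (fun i => rsum m (fun j => F i j)) =
  rsum m (fun j => rsum n (fun i => F i j)).
Proof.
  induction n; simpl.
  - induction m; simpl; auto. rewrite <- IHm; ring.
  - rewrite IHn. rewrite <- rsum_add. auto.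
Qed.

Lemma rsum_cont n (F : nat -> R -> R) : (forall k, (k < n)%nat -> continuity (F k)) ->
  continuity (fun t => rsum n (fun k => F k t)).
Proof.
  induction n; simpl; intros H.
  - apply continuity_const. intros ? ?; auto.
  - apply (continuity_plus (fun t => rsum n (fun k => F k t)) (F n)).
    apply IHn; intros; apply H; lia. apply H; lia.
Qed.

Lemma dot_ext n Bm u u' w w' : (forall i, (i < n)%nat -> u i = u' i) ->
  (forall i, (i < n)%nat -> w i = w' i) -> dot n Bm u w = dot n Bm u' w'.
Proof.
  intros Hu Hw. unfold dot. apply rsum_ext; intros i Hi. apply rsum_ext; intros j Hj.
  rewrite Hu, Hw; auto.
Qed.

Lemma dot_cont n Bm (u w : R -> vec) :
  (forall i, (i < n)%nat -> continuity (fun t => u t i)) ->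
  (forall i, (i < n)%nat -> continuity (fun t => w t i)) ->
  continuity (fun t => dot n Bm (u t) (w t)).
Proof.
  intros Hu Hw. unfold dot.
  apply (rsum_cont n (fun i t => rsum n (fun j => Bm i j * u t i * w t j))).
  intros i Hi.
  apply (rsum_cont n (fun j t => Bm i j * u t i * w t j)).
  intros j Hj.
  apply (continuity_mult (fun t => Bm i j * u t i) (fun t => w t j)); auto.
  apply (continuity_mult (fun t => Bm i j) (fun t => u t i)); auto.
  apply continuity_const. intros ? ?; auto.
Qed.

Lemma dot_addl n Bm u u' w : dot n Bm (fun i => u i + u' i) w = dot n Bm u w + dot n Bm u' w.
Proof.
  unfold dot. rewrite <- rsum_add. apply rsum_ext; intros.
  rewrite <- rsum_add. apply rsum_ext; intros. ring.
Qed.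

Lemma dot_addr n Bm u w w' : dot n Bm u (fun i => w i + w' i) = dot n Bm u w + dot n Bm u w'.
Proof.
  unfold dot. rewrite <- rsum_add. apply rsum_ext; intros.
  rewrite <- rsum_add. apply rsum_ext; intros. ring.
Qed.

Lemma dot_scall n Bm c u w : dot n Bm (fun i => c * u i) w = c * dot n Bm u w.
Proof.
  unfold dot. rewrite <- rsum_scal. apply rsum_ext; intros.
  rewrite <- rsum_scal. apply rsum_ext; intros. ring.
Qed.

Lemma dot_sym n Bm u w : (forall i j, (i < n)%nat -> (j < n)%nat -> Bm i j = Bm j i) ->
  dot n Bm u w = dot n Bm w u.
Proof.
  intros HS. unfold dot. rewrite rsum_swap. apply rsum_ext; intros.
  apply rsum_ext; intros. rewrite HS by auto. ring.
Qed.

Lemma matvec_ext n M u u' i : (forall j, (j < n)%nat -> u j = u' j) ->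
  matvec n M u i = matvec n M u' i.
Proof. intros H. unfold matvec. apply rsum_ext. intros; rewrite H; auto. Qed.

Lemma matvec_add n M u w i : matvec n M (fun j => u j + w j) i = matvec n M u i + matvec n M w i.
Proof. unfold matvec. rewrite <- rsum_add. apply rsum_ext; intros; ring. Qed.

Lemma curve_props n xi : smooth_curve n xi -> forall i, (i < n)%nat ->
  (forall t, derivable_pt_lim (fun s => xi s i) t (dcurve xi t i)) /\
  continuity (fun t => dcurve xi t i) /\ continuity (fun t => xi t i).
Proof. intros H i Hi. apply (smooth_props _ (H i Hi)). Qed.

Lemma lin_deriv c d x : derivable_pt_lim (fun t => c * t + d) x c.
Proof.
  pose proof (derivable_pt_lim_plus (mult_real_fct c id) (fun _ => d) x (c*1) 0
    (derivable_pt_lim_scal id c x 1 (derivable_pt_lim_id x)) (derivable_pt_lim_const d x)) as Hl.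
  rewrite Rmult_1_r, Rplus_0_r in Hl. exact Hl.
Qed.

Definition hint n Bm (x1 x2 : R -> vec) := fun t => dot n Bm (dcurve x1 t) (x2 t).

Lemma hint_cont n Bm x1 x2 : smooth_curve n x1 -> smooth_curve n x2 ->
  continuity (hint n Bm x1 x2).
Proof.
  intros H1 H2. unfold hint. apply dot_cont.
  intros i Hi; apply (curve_props n x1 H1 i Hi).
  intros i Hi; apply (curve_props n x2 H2 i Hi).
Qed.

Lemma half n Bm z1 z2 x1 x2 a b d :
  smooth_curve n x1 ->
  (forall t i, (i < n)%nat -> a <= t <= b -> z1 t i = x1 (2 * t + d) i) ->
  (forall t i, (i < n)%nat -> a <= t <= b -> z2 t i = x2 (2 * t + d) i) ->
  forall t, a < t < b -> hint n Bm z1 z2 t = 2 * hint n Bm x1 x2 (2 * t + d).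
Proof.
  intros S1 E1 E2 t Ht. unfold hint. rewrite <- dot_scall. apply dot_ext.
  - intros i Hi. unfold dcurve at 1. apply deriv_unique.
    apply (deriv_local (fun s => x1 (2 * s + d) i) _ a b). auto.
    intros y Hy. rewrite E1; auto; lra.
    rewrite Rmult_comm.
    apply (derivable_pt_lim_comp (fun s => 2 * s + d) (fun u => x1 u i)).
    apply lin_deriv. apply (curve_props n x1 S1 i Hi).
  - intros i Hi. apply E2; auto; lra.
Qed.

Lemma int_split n Bm z1 z2 x1_1 x1_2 x2_1 x2_2 :
  smooth_curve n z1 -> smooth_curve n z2 ->
  smooth_curve n x1_1 -> smooth_curve n x1_2 ->
  smooth_curve n x2_1 -> smooth_curve n x2_2 ->
  (forall t i, (i < n)%nat -> 0 <= t <= / 2 -> z1 t i = x1_1 (2 * t) i) ->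
  (forall t i, (i < n)%nat -> 0 <= t <= / 2 -> z2 t i = x1_2 (2 * t) i) ->
  (forall t i, (i < n)%nat -> / 2 <= t <= 1 -> z1 t i = x2_1 (2 * t - 1) i) ->
  (forall t i, (i < n)%nat -> / 2 <= t <= 1 -> z2 t i = x2_2 (2 * t - 1) i) ->
  Rint (hint n Bm z1 z2) 0 1 = Rint (hint n Bm x1_1 x1_2) 0 1 + Rint (hint n Bm x2_1 x2_2) 0 1.
Proof.
  intros Sz1 Sz2 S11 S12 S21 S22 A1 A2 B1 B2.
  assert (Cz := hint_cont n Bm _ _ Sz1 Sz2).
  assert (C1 := hint_cont n Bm _ _ S11 S12).
  assert (C2 := hint_cont n Bm _ _ S21 S22).
  assert (RI : forall f a b, continuity f -> a <= b -> Riemann_integrable f a b).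
  { intros f a b Cf hab. apply continuity_implies_RiemannInt; auto. }
  rewrite (Rint_eq _ _ _ (RI _ 0 1 Cz ltac:(lra))).
  rewrite (Rint_eq _ _ _ (RI _ 0 1 C1 ltac:(lra))).
  rewrite (Rint_eq _ _ _ (RI _ 0 1 C2 ltac:(lra))).
  rewrite <- (@RiemannInt_P25 _ _ _ _ (RI _ 0 (/2) Cz ltac:(lra)) (RI _ (/2) 1 Cz ltac:(lra)))
    by lra.
  assert (Ck : forall (h : R -> R) d, continuity h -> continuity (fun t => 2 * h (2 * t + d))).
  { intros h d Ch. apply (continuity_mult (fun _ => 2) (fun t => h (2 * t + d))).
    apply continuity_const; intros ? ?; auto.
    intro x. apply (continuity_pt_comp (fun t => 2 * t + d) h).
    apply derivable_continuous_pt. exists 2. apply lin_deriv. apply Ch. }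
  f_equal.
  - rewrite (@RiemannInt_P18 _ _ _ _ _ (RI _ 0 (/2) (Ck _ 0 C1) ltac:(lra))).
    + apply cov; auto; lra.
    + lra.
    + apply half with (a := 0) (b := /2); auto.
      all: intros; replace (2 * t + 0) with (2 * t) by ring; auto.
  - rewrite (@RiemannInt_P18 _ _ _ _ _ (RI _ (/2) 1 (Ck _ (-1) C2) ltac:(lra))).
    + apply cov; auto; lra.
    + lra.
    + apply half with (a := /2) (b := 1); auto.
      all: intros; replace (2 * t + -1) with (2 * t - 1) by ring; auto.
Qed.

Lemma dot_subl n Bm u u' w : dot n Bm (fun i => u i - u' i) w = dot n Bm u w - dot n Bm u' w.
Proof.
  replace (fun i => u i - u' i) with (fun i => u i + (fun k => -1 * u' k) i)
    by (apply functional_extensionality; intro; ring).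
  rewrite dot_addl, dot_scall. ring.
Qed.

Lemma matvec_sub n M u w i : matvec n M (fun j => u j - w j) i = matvec n M u i - matvec n M w i.
Proof.
  unfold matvec. replace (matvec n M u i) with (rsum n (fun j => M i j * u j)) by reflexivity.
  unfold Rminus. rewrite <- (Rmult_1_l (rsum n (fun j => M i j * w j))).
  rewrite Ropp_mult_distr_l, <- rsum_scal, <- rsum_add.
  apply rsum_ext; intros; ring.
Qed.

Theorem proposition6p1 (n : nat) (G : LieGroup n) (Bm : nat -> nat -> R)
  (HB : invariant_form n G Bm) (g2 g1 : G)
  (xi2_1 xi1_1 xi2_2 xi1_2 zeta1 zeta2 : R -> vec)
  (H1 : is_concat n G g2 g1 xi2_1 xi1_1 zeta1)
  (H2 : is_concat n G g2 g1 xi2_2 xi1_2 zeta2)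
  (X2_1 X2_2 : Tan G g2) (X1_1 X1_2 : Tan G g1)
  (HX2_1 : is_anchor n G g2 xi2_1 X2_1) (HX2_2 : is_anchor n G g2 xi2_2 X2_2)
  (HX1_1 : is_anchor n G g1 xi1_1 X1_1) (HX1_2 : is_anchor n G g1 xi1_2 X1_2) :
  varpi n G Bm (gmul G g2 g1) zeta1 zeta2 =
  varpi n G Bm g2 xi2_1 xi2_2 + varpi n G Bm g1 xi1_1 xi1_2
  - lam n G Bm g2 g1 X2_1 X1_1 X2_2 X1_2.
Proof.
  destruct HB as [HS HI].
  destruct H1 as [[S21 _] [[S11 _] [C1 [Sz1 [Z1a [Z1b _]]]]]].
  destruct H2 as [[S22 _] [[S12 _] [C2 [Sz2 [Z2a [Z2b _]]]]]].
  assert (Hint := int_split n Bm zeta1 zeta2 xi1_1 xi1_2 xi2_1 xi2_2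
                    Sz1 Sz2 S11 S12 S21 S22 Z1a Z2a Z1b Z2b).
  unfold hint in Hint. unfold varpi. rewrite Hint. clear Hint.
  set (Ad2 := Ad G g2). set (Ad1 := Ad G g1).
  assert (F01 : forall i, (i < n)%nat -> zeta1 0 i = xi1_1 0 i).
  { intros i Hi. rewrite Z1a by (auto; lra). rewrite Rmult_0_r; auto. }
  assert (F02 : forall i, (i < n)%nat -> zeta2 0 i = xi1_2 0 i).
  { intros i Hi. rewrite Z2a by (auto; lra). rewrite Rmult_0_r; auto. }
  assert (F11 : forall i, (i < n)%nat -> zeta1 1 i = xi2_1 1 i).
  { intros i Hi. rewrite Z1b by (auto; lra). replace (2 * 1 - 1) with 1 by ring; auto. }
  assert (F12 : forall i, (i < n)%nat -> zeta2 1 i = xi2_2 1 i).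
  { intros i Hi. rewrite Z2b by (auto; lra). replace (2 * 1 - 1) with 1 by ring; auto. }
  assert (A1 : forall i, (i < n)%nat -> matvec n Ad1 (xi1_1 0) i =
                 xi2_1 0 i - vxi n G g1 xi1_1 i).
  { intros i Hi. unfold vxi. rewrite <- C1 by auto. fold Ad1. ring. }
  assert (A2 : forall i, (i < n)%nat -> matvec n Ad1 (xi1_2 0) i =
                 xi2_2 0 i - vxi n G g1 xi1_2 i).
  { intros i Hi. unfold vxi. rewrite <- C2 by auto. fold Ad1. ring. }
  assert (M1 : forall i, (i < n)%nat -> matvec n (Ad G (gmul G g2 g1)) (zeta1 0) i =
     matvec n Ad2 (xi2_1 0) i - matvec n Ad2 (vxi n G g1 xi1_1) i).
  { intros i Hi. rewrite Ad_mul by auto. rewrite <- matvec_sub.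
    apply matvec_ext. intros j Hj. rewrite <- A1 by auto. apply matvec_ext. auto. }
  assert (M2 : forall i, (i < n)%nat -> matvec n (Ad G (gmul G g2 g1)) (zeta2 0) i =
     matvec n Ad2 (xi2_2 0) i - matvec n Ad2 (vxi n G g1 xi1_2) i).
  { intros i Hi. rewrite Ad_mul by auto. rewrite <- matvec_sub.
    apply matvec_ext. intros j Hj. rewrite <- A2 by auto. apply matvec_ext. auto. }
  assert (V1 : forall i, (i < n)%nat -> vxi n G (gmul G g2 g1) zeta1 i =
     vxi n G g2 xi2_1 i + matvec n Ad2 (vxi n G g1 xi1_1) i).
  { intros i Hi. unfold vxi at 1. rewrite M1, F11 by auto. unfold vxi. fold Ad2. ring. }
  assert (V2 : forall i, (i < n)%nat -> vxi n G (gmul G g2 g1) zeta2 i =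
     vxi n G g2 xi2_2 i + matvec n Ad2 (vxi n G g1 xi1_2) i).
  { intros i Hi. unfold vxi at 1. rewrite M2, F12 by auto. unfold vxi. fold Ad2. ring. }
  set (W2 := fun i => vxi n G g2 xi2_2 i + matvec n Ad2 (vxi n G g1 xi1_2) i).
  rewrite (dot_ext n Bm (matvec n (Ad G (gmul G g2 g1)) (zeta1 0))
     (fun i => matvec n Ad2 (xi2_1 0) i - matvec n Ad2 (vxi n G g1 xi1_1) i)
     (vxi n G (gmul G g2 g1) zeta2) W2 M1 V2).
  rewrite (dot_ext n Bm (vxi n G (gmul G g2 g1) zeta1)
     (fun i => vxi n G g2 xi2_1 i + matvec n Ad2 (vxi n G g1 xi1_1) i)
     (vxi n G (gmul G g2 g1) zeta2) W2 V1 V2).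
  unfold W2.
  rewrite (dot_ext n Bm (matvec n Ad1 (xi1_1 0)) (fun i => xi2_1 0 i - vxi n G g1 xi1_1 i)
     (vxi n G g1 xi1_2) (vxi n G g1 xi1_2) A1 (fun _ _ => eq_refl)).
  rewrite dot_subl, dot_subl, !dot_addl, !dot_addr.
  unfold lam.
  rewrite (dot_ext n Bm (thetaL G g2 X2_1) (thetaL G g2 X2_1) (thetaR G g1 X1_2) (vxi n G g1 xi1_2))
    by auto.
  rewrite (dot_ext n Bm (thetaL G g2 X2_2) (thetaL G g2 X2_2) (thetaR G g1 X1_1) (vxi n G g1 xi1_1))
    by auto.
  rewrite <- (HI g2 (thetaL G g2 X2_1)), <- (HI g2 (thetaL G g2 X2_2)).
  fold Ad2.
  rewrite (dot_ext n Bm (matvec n Ad2 (thetaL G g2 X2_1)) (vxi n G g2 xi2_1)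
    (matvec n Ad2 (vxi n G g1 xi1_2)) (matvec n Ad2 (vxi n G g1 xi1_2))).
  2: { intros i Hi. rewrite <- HX2_1 by auto. rewrite thetaR_Ad by auto. reflexivity. }
  2: { intros; reflexivity. }
  rewrite (dot_ext n Bm (matvec n Ad2 (thetaL G g2 X2_2)) (vxi n G g2 xi2_2)
    (matvec n Ad2 (vxi n G g1 xi1_1)) (matvec n Ad2 (vxi n G g1 xi1_1))).
  2: { intros i Hi. rewrite <- HX2_2 by auto. rewrite thetaR_Ad by auto. reflexivity. }
  2: { intros; reflexivity. }
  assert (I1 := HI g2 (xi2_1 0) (vxi n G g1 xi1_2)).
  assert (I2 := HI g2 (vxi n G g1 xi1_1) (vxi n G g1 xi1_2)).
  assert (Sy := dot_sym n Bm (vxi n G g2 xi2_2) (matvec n Ad2 (vxi n G g1 xi1_1)) HS).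
  fold Ad2 in I1, I2.
  lra.
Qed.
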